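(* Let $A,B\in\mathrm{SL}_2\mathbb{Z}$ be noncommuting, well oriented, with $2\le\mathrm{tr}(A)<\mathrm{tr}(B)$ and $\mathrm{tr}(AB)>\mathrm{tr}(B^2)$, and assume $[(ab^2)^2]\le[(ab)^3]-2$. Fix a word $w$ and let $k\ge1$ be such that the length of $wab^2(ab)^kab^2$ is a multiple of $6$. If $w$ is empty, or is a product of copies of $ab$ and $ab^2$, then $[wab^2(ab)^kab^2]<[w(ab)^{k+3}]$.
   Context: Words are finite strings over $\{a,b\}$; $\phi$ is the monoid homomorphism with $\phi(a)=A,\phi(b)=B$, and $[w]=\mathrm{tr}(\phi(w))$. Fixed points are for the Möbius action on $\partial\mathcal{H}=\mathbb{P}^1\mathbb{R}$; $\alpha^\pm$ ($\beta^\pm$) are the attracting/repelling fixed points of $A$ ($B$), both equal to the unique fixed point if parabolic. With $\partial\mathcal{H}$ cyclically ordered and $[\alpha,\beta]$ the closed counterclockwise interval from $\alpha$ to $\beta$, let $I^+=\{\alpha^+\}$ if $\alpha^+=\beta^+$, and otherwise the one of $[\alpha^+,\beta^+],[\beta^+,\alpha^+]$ mapped into itself by both $A$ and $B$ (if it exists); define $I^-$ likewise with $A^{-1},B^{-1},\alpha^-,\beta^-$. The pair is coherently oriented if both exist, and well oriented if $A,B$ is coherently oriented but $A,B^{-1}$ is not. *)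

(* Defs.v *)
From mathcomp Require Import all_boot all_order all_algebra.
From mathcomp Require Import Rstruct.
Set Implicit Arguments. Unset Strict Implicit. Unset Printing Implicit Defensive.
Import Order.TTheory GRing.Theory Num.Theory.
Local Open Scope ring_scope.

Definition la : bool := true.
Definition lb : bool := false.
Definition word := seq bool.

Definition phi (A B : 'M[int]_2) (w : word) : 'M[int]_2 :=
  foldr (fun l M => (if l then A else B) *m M) 1%:M w.

Definition trw (A B : 'M[int]_2) (w : word) : int := \tr (phi A B w).

Definition w_ab : word := [:: la; lb].
Definition w_ab2 : word := [:: la; lb; lb].
Definition w_abk (k : nat) : word := flatten (nseq k w_ab).

Definition is_ab_ab2_product (w : word) : Prop :=
  exists ws : seq word,
    all (fun u => (u == w_ab) || (u == w_ab2)) ws /\ w = flatten ws.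

(* P^1 R = R u {oo}, with None = oo *)
Definition P1 (R : realFieldType) := option R.

Definition mob (R : realFieldType) (M : 'M[R]_2) (p : P1 R) : P1 R :=
  match p with
  | None => if M 1 0 == 0 then None else Some (M 0 0 / M 1 0)
  | Some x => if M 1 0 * x + M 1 1 == 0 then None
              else Some ((M 0 0 * x + M 0 1) / (M 1 0 * x + M 1 1))
  end.

(* eigenvalue of M on the line represented by p:
   M (x,1)^T = (M 1 0 * x + M 1 1) (x,1)^T when x is fixed,
   M (1,0)^T = M 0 0 (1,0)^T when oo is fixed. *)
Definition multiplier (R : realFieldType) (M : 'M[R]_2) (p : P1 R) : R :=
  match p with
  | None => M 0 0
  | Some x => M 1 0 * x + M 1 1
  end.

Definition is_fixed (R : realFieldType) (M : 'M[R]_2) (p : P1 R) : Prop :=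
  mob M p = p.

(* attracting fixed point (for det M = 1): the fixed point whose eigenvalue
   has modulus >= 1 (i.e. derivative 1/lambda^2 of modulus <= 1);
   for a parabolic M the unique fixed point is both attracting and repelling *)
Definition is_attr (R : realFieldType) (M : 'M[R]_2) (p : P1 R) : Prop :=
  is_fixed M p /\ 1 <= `|multiplier M p|.
Definition is_rep (R : realFieldType) (M : 'M[R]_2) (p : P1 R) : Prop :=
  is_fixed M p /\ `|multiplier M p| <= 1.

(* linear order on R u {oo} with oo as the largest element; the induced
   cyclic order is the counterclockwise orientation of the boundary *)
Definition ltP1 (R : realFieldType) (x y : P1 R) : bool :=
  match x, y with
  | Some a, Some b => a < b
  | Some _, None => true
  | None, _ => false
  end.

(* strict cyclic order: going counterclockwise from a one meets x before b *)
Definition cyc (R : realFieldType) (a x b : P1 R) : Prop :=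
  (ltP1 a x && ltP1 x b) \/ (ltP1 x b && ltP1 b a) \/ (ltP1 b a && ltP1 a x).

Definition ccw_int (R : realFieldType) (a b : P1 R) (x : P1 R) : Prop :=
  x = a \/ x = b \/ cyc a x b.

Definition maps_into_itself (R : realFieldType) (M : 'M[R]_2)
  (I : P1 R -> Prop) : Prop := forall x, I x -> I (mob M x).

Definition interval_exists (R : realFieldType) (M N : 'M[R]_2)
  (p q : P1 R) : Prop :=
  p = q \/
  (maps_into_itself M (ccw_int p q) /\ maps_into_itself N (ccw_int p q)) \/
  (maps_into_itself M (ccw_int q p) /\ maps_into_itself N (ccw_int q p)).

Definition coherently_oriented (R : realFieldType) (A B : 'M[R]_2) : Prop :=
  exists ap bp am bm : P1 R,
    is_attr A ap /\ is_attr B bp /\ is_rep A am /\ is_rep B bm /\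
    interval_exists A B ap bp /\
    interval_exists (invmx A) (invmx B) am bm.

Definition well_oriented (R : realFieldType) (A B : 'M[R]_2) : Prop :=
  coherently_oriented A B /\ ~ coherently_oriented A (invmx B).

Definition toR (M : 'M[int]_2) : 'M[Rdefinitions.R]_2 :=
  map_mx (fun z : int => z%:~R) M.

(* Main.v *)
Require Import Defs.
From mathcomp Require Import all_boot all_order all_algebra.
From mathcomp Require Import Rstruct.
From mathcomp Require Import ring lra.
Import Order.TTheory GRing.Theory Num.Theory.
Local Open Scope ring_scope.


Lemma mul22 (R : comNzRingType) (M N : 'M[R]_2) i j :
  (M *m N) i j = M i 0 * N 0 j + M i 1 * N 1 j.
Proof.
rewrite !mxE !big_ord_recl big_ord0 addr0.
by have -> : lift (ord0 : 'I_2) (ord0 : 'I_1) = 1 by apply: val_inj.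
Qed.
Lemma tr22 (R : comNzRingType) (M : 'M[R]_2) : \tr M = M 0 0 + M 1 1.
Proof.
rewrite /mxtrace !big_ord_recl big_ord0 addr0.
by have -> : lift (ord0 : 'I_2) (ord0 : 'I_1) = 1 by apply: val_inj.
Qed.
Lemma det22 (R : comNzRingType) (M : 'M[R]_2) :
  \det M = M 0 0 * M 1 1 - M 0 1 * M 1 0.
Proof.
rewrite (expand_det_row M 0) !big_ord_recl big_ord0 addr0 /cofactor.
rewrite !det_mx11 /= !mxE /=.
have -> : lift (0 : 'I_2) (0 : 'I_1) = 1 by apply: val_inj.
have -> : lift (1 : 'I_2) (0 : 'I_1) = 0 by apply: val_inj.
rewrite /bump /= expr0 expr1 mul1r mulN1r; congr (_ + _).
by rewrite mulrN.
Qed.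
Lemma mx22P (R : comNzRingType) (M N : 'M[R]_2) :
  M 0 0 = N 0 0 -> M 0 1 = N 0 1 -> M 1 0 = N 1 0 -> M 1 1 = N 1 1 -> M = N.
Proof.
move=> h00 h01 h10 h11; apply/matrixP => i j.
have Hi : i = 0 \/ i = 1 by case: i => [[|[|n]] Hi]; [left; apply: val_inj|right; apply: val_inj|].
have Hj : j = 0 \/ j = 1 by case: j => [[|[|n]] Hj]; [left; apply: val_inj|right; apply: val_inj|].
by case: Hi => ->; case: Hj => ->.
Qed.
Lemma e_add (R : comNzRingType) (M N : 'M[R]_2) i j : (M + N) i j = M i j + N i j.
Proof. by rewrite mxE. Qed.
Lemma e_opp (R : comNzRingType) (M : 'M[R]_2) i j : (- M) i j = - M i j.
Proof. by rewrite mxE. Qed.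
Lemma e_scale (R : comNzRingType) (a : R) (M : 'M[R]_2) i j : (a *: M) i j = a * M i j.
Proof. by rewrite mxE. Qed.
Lemma e_scalar (R : comNzRingType) (a : R) (i j : 'I_2) : (a%:M : 'M[R]_2) i j = a *+ (i == j).
Proof. by rewrite mxE. Qed.

Ltac ent := rewrite ?(e_add, e_opp, e_scale, e_scalar, mul22) /= ?mulr0n ?mulr1n.
Ltac mx22ring := apply: mx22P; ent; ring.

Definition phiG {R : comNzRingType} (A B : 'M[R]_2) (w : word) : 'M[R]_2 :=
  foldr (fun l M => (if l then A else B) *m M) 1%:M w.

Definition lc {R : comNzRingType} (A B : 'M[R]_2) (c : R * R * R * R) : 'M[R]_2 :=
  let: (c0, c1, c2, c3) := c in c0%:M + c1 *: A + c2 *: B + c3 *: (A *m B).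

Definition cA {R : comNzRingType} (x dA : R) (c : R * R * R * R) : R * R * R * R :=
  let: (c0, c1, c2, c3) := c in (- (c1 * dA), c0 + c1 * x, - (c3 * dA), c2 + c3 * x).
Definition cB {R : comNzRingType} (x y z dB : R) (c : R * R * R * R) : R * R * R * R :=
  let: (c0, c1, c2, c3) := c in
  (c1 * (z - x * y) - c2 * dB - c3 * x * dB, c1 * y + c3 * dB,
   c0 + c1 * x + c2 * y + c3 * z, - c1).
Fixpoint coef {R : comNzRingType} (x y z dA dB : R) (w : word) : R * R * R * R :=
  match w with
  | [::] => (1, 0, 0, 0)
  | l :: w' => if l then cA x dA (coef x y z dA dB w') else cB x y z dB (coef x y z dA dB w')
  end.
Definition tp {R : comNzRingType} (x y z : R) (c : R * R * R * R) : R :=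
  let: (c0, c1, c2, c3) := c in c0 * 2 + c1 * x + c2 * y + c3 * z.

Lemma lcA (R : comNzRingType) (A B : 'M[R]_2) c :
  A *m lc A B c = lc A B (cA (\tr A) (\det A) c).
Proof. case: c => [[[c0 c1] c2] c3]; rewrite /= tr22 det22; mx22ring. Qed.
Lemma lcB (R : comNzRingType) (A B : 'M[R]_2) c :
  B *m lc A B c = lc A B (cB (\tr A) (\tr B) (\tr (A *m B)) (\det B) c).
Proof. case: c => [[[c0 c1] c2] c3]; rewrite /= !tr22 det22; mx22ring. Qed.
Lemma phi_lc (R : comNzRingType) (A B : 'M[R]_2) w :
  phiG A B w = lc A B (coef (\tr A) (\tr B) (\tr (A *m B)) (\det A) (\det B) w).
Proof.
elim: w => [|l w IH] /=; first by mx22ring.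
by case: l; rewrite IH ?lcA ?lcB.
Qed.
Lemma tr_lc (R : comNzRingType) (A B : 'M[R]_2) c :
  \tr (lc A B c) = tp (\tr A) (\tr B) (\tr (A *m B)) c.
Proof. case: c => [[[c0 c1] c2] c3]; rewrite /= !tr22; ent; ring. Qed.
Lemma tr_phi (R : comNzRingType) (A B : 'M[R]_2) w :
  \tr (phiG A B w) = tp (\tr A) (\tr B) (\tr (A *m B)) (coef (\tr A) (\tr B) (\tr (A *m B)) (\det A) (\det B) w).
Proof. by rewrite phi_lc tr_lc. Qed.

Definition addt {R : comNzRingType} (c d : R * R * R * R) : R * R * R * R :=
  let: (c0, c1, c2, c3) := c in let: (d0, d1, d2, d3) := d in (c0 + d0, c1 + d1, c2 + d2, c3 + d3).
Definition subt {R : comNzRingType} (c d : R * R * R * R) : R * R * R * R :=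
  let: (c0, c1, c2, c3) := c in let: (d0, d1, d2, d3) := d in (c0 - d0, c1 - d1, c2 - d2, c3 - d3).
Definition sclt {R : comNzRingType} (a : R) (c : R * R * R * R) : R * R * R * R :=
  let: (c0, c1, c2, c3) := c in (a * c0, a * c1, a * c2, a * c3).
Lemma lc_add (R : comNzRingType) (A B : 'M[R]_2) c d : lc A B (addt c d) = lc A B c + lc A B d.
Proof. case: c => [[[c0 c1] c2] c3]; case: d => [[[d0 d1] d2] d3]; mx22ring. Qed.
Lemma lc_sub (R : comNzRingType) (A B : 'M[R]_2) c d : lc A B (subt c d) = lc A B c - lc A B d.
Proof. case: c => [[[c0 c1] c2] c3]; case: d => [[[d0 d1] d2] d3]; mx22ring. Qed.
Lemma lc_scl (R : comNzRingType) (A B : 'M[R]_2) a c : lc A B (sclt a c) = a *: lc A B c.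
Proof. case: c => [[[c0 c1] c2] c3]; mx22ring. Qed.
Lemma lc_eq (R : comNzRingType) (A B : 'M[R]_2) c0 c1 c2 c3 d0 d1 d2 d3 :
  c0 = d0 -> c1 = d1 -> c2 = d2 -> c3 = d3 -> lc A B (c0, c1, c2, c3) = lc A B (d0, d1, d2, d3).
Proof. by move=> -> -> -> ->. Qed.
Lemma lc_Bix (R : comNzRingType) (A B : 'M[R]_2) (x : R) : B - (x%:M - A) = lc A B (- x, 1, 1, 0).
Proof. mx22ring. Qed.
Lemma lc_sc (R : comNzRingType) (A B : 'M[R]_2) (t : R) : t%:M = lc A B (t, 0, 0, 0).
Proof. mx22ring. Qed.

Lemma J1 (R : comNzRingType) (A B : 'M[R]_2) (x y z : R) :
  \det A = 1 -> \det B = 1 -> \tr A = x -> \tr B = y -> \tr (A *m B) = z ->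
  phiG A B (lb :: w_abk 4) - phiG A B (lb :: w_ab2 ++ w_ab2 ++ w_ab) =
  (z ^+ 3 - 3 * z - (y * z - x) ^+ 2) *: phiG A B [:: lb; la; lb]
  + (z + 1) *: (B - (x%:M - A)) + (y * z - x)%:M.
Proof.
move=> dA dB hx hy hz.
rewrite !phi_lc dA dB hx hy hz lc_Bix (@lc_sc _ A B (y * z - x)).
rewrite -!lc_scl -lc_sub -!lc_add /=.
apply: lc_eq; ring.
Qed.

Lemma J2 (R : comNzRingType) (A B : 'M[R]_2) (x y z : R) :
  \det A = 1 -> \det B = 1 -> \tr A = x -> \tr B = y -> \tr (A *m B) = z ->
  (z - 1) *: ((phiG A B (lb :: w_abk 5) - phiG A B (lb :: w_ab2 ++ w_ab ++ w_ab2 ++ w_ab))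
     - (phiG A B (lb :: w_abk 4) - phiG A B (lb :: w_ab2 ++ w_ab2 ++ w_ab))) =
  (z * (z - 2) * (z ^+ 3 - 3 * z - (y * z - x) ^+ 2) - (y - x) * (y * z - x)) *: phiG A B [:: lb; la; lb]
  + (z * (z - 2) * (z + 1)) *: (B - (x%:M - A)) + (z * (z - 2) * (y * z - x) + (y - x))%:M.
Proof.
move=> dA dB hx hy hz.
rewrite !phi_lc dA dB hx hy hz lc_Bix (@lc_sc _ A B (z * (z - 2) * (y * z - x) + (y - x))).
rewrite -!lc_scl -!lc_sub -!lc_scl -!lc_add /=.
apply: lc_eq; ring.
Qed.


Lemma phiG_cat (R : comNzRingType) (A B : 'M[R]_2) u v :
  phiG A B (u ++ v) = phiG A B u * phiG A B v.
Proof.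
elim: u => [|l u IH] /=; first by rewrite mul1r.
by rewrite IH !mulmxE mulrA.
Qed.
Lemma phiG_cons (R : comNzRingType) (A B : 'M[R]_2) l w :
  phiG A B (l :: w) = (if l then A else B) * phiG A B w.
Proof. by rewrite /= mulmxE. Qed.
Lemma phiG_ab (R : comNzRingType) (A B : 'M[R]_2) : phiG A B w_ab = A * B.
Proof. by rewrite /= mulmx1 mulmxE. Qed.
Lemma phiG_ab2 (R : comNzRingType) (A B : 'M[R]_2) : phiG A B w_ab2 = A * B * B.
Proof. by rewrite /= mulmx1 !mulmxE mulrA. Qed.
Lemma phiG_b (R : comNzRingType) (A B : 'M[R]_2) : phiG A B [:: lb] = B.
Proof. by rewrite /= mulmx1. Qed.
Lemma phiG_abk (R : comNzRingType) (A B : 'M[R]_2) k : phiG A B (w_abk k) = (A * B) ^+ k.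
Proof.
elim: k => [|k IH]; first by rewrite /= expr0.
by rewrite exprS -IH /= !mulmxE mulrA.
Qed.

Definition Dm {R : comNzRingType} (A B : 'M[R]_2) (k : nat) : 'M[R]_2 :=
  (A * B) ^+ (k + 3) - (A * B * B) * (A * B) ^+ k * (A * B * B).

Lemma words_D (R : comNzRingType) (A B : 'M[R]_2) pre k :
  phiG A B (pre ++ w_abk (k + 3)) - phiG A B (pre ++ w_ab2 ++ w_abk k ++ w_ab2)
  = phiG A B pre * Dm A B k.
Proof.
rewrite !phiG_cat !phiG_abk phiG_ab2 /Dm mulrBr.
by rewrite -!mulrA.
Qed.

Lemma words_M (R : comNzRingType) (A B : 'M[R]_2) k :
  phiG A B (lb :: w_abk (k + 4)) - phiG A B (lb :: w_ab2 ++ w_abk k ++ w_ab2 ++ w_ab)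
  = B * Dm A B k * (A * B).
Proof.
rewrite !phiG_cons !phiG_cat !phiG_abk phiG_ab2 phiG_ab /Dm.
by rewrite mulrBr mulrBl -!mulrA -exprSr addnS.
Qed.

Lemma lin_aux (R : comNzRingType) (z : R) (Q a b c e : 'M[R]_2) :
  (z *: a - b) - Q * (z *: c - e) * Q = z *: (a - Q * c * Q) - (b - Q * e * Q).
Proof.
rewrite -!mulmxE; mx22ring.
Qed.

Lemma CH22 (R : comNzRingType) (M : 'M[R]_2) : M * M = \tr M *: M - (\det M)%:M.
Proof. rewrite -mulmxE tr22 det22; mx22ring. Qed.

Lemma Dm_rec (R : comNzRingType) (A B : 'M[R]_2) k :
  \det (A * B) = 1 ->
  Dm A B (k.+2) = \tr (A * B) *: Dm A B k.+1 - Dm A B k.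
Proof.
move=> dP; set P := A * B; set z := \tr P.
have hP : forall n, P ^+ n.+2 = z *: P ^+ n.+1 - P ^+ n.
  move=> n; rewrite exprSr [P ^+ n.+1]exprSr -mulrA CH22 dP mulrBr -scalerAr.
  by rewrite -exprSr -mulmxE mulmx1.
rewrite /Dm !addSn !hP.
exact: lin_aux.
Qed.


Lemma tr_rec (R : comNzRingType) (A B L M : 'M[R]_2) k :
  \det (A * B) = 1 ->
  \tr (L * Dm A B k.+2 * M) = \tr (A * B) * \tr (L * Dm A B k.+1 * M) - \tr (L * Dm A B k * M).
Proof.
move=> dP; rewrite Dm_rec // mulrBr mulrBl -scalerAr -scalerAl.
by rewrite raddfB /= mxtraceZ.
Qed.

Lemma seq_pos (R : realFieldType) (f : nat -> R) (z : R) :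
  2 <= z -> (forall k, f k.+2 = z * f k.+1 - f k) -> 0 < f 0 -> f 0 <= f 1 ->
  forall k, 0 < f k.
Proof.
move=> hz hr h0 h1.
have H : forall k, f 0 <= f k /\ f k <= f k.+1.
  elim=> [|k [IH1 IH2]]; first by split.
  split; first by apply: le_trans IH2.
  rewrite hr.
  have : 0 < f k.+1 by apply: lt_le_trans (le_trans IH1 IH2).
  nra.
by move=> k; case: (H k) => H1 _; apply: lt_le_trans H1.
Qed.


Lemma zgt {R : realFieldType} {x y z : R} : 2 <= x -> x < y -> y^+2 - 2 < z -> y < z.
Proof. move=> h1 h2 h3. nra. Qed.

Lemma K1 {R : realFieldType} {x y z : R} : 2 <= x -> x < y -> y^+2 - 2 < z ->
  (y - x) * (y * z - x) <= (z - 2) * (z + 1).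
Proof.
move=> h1 h2 h3; have hz := zgt h1 h2 h3.
have e1 : (y - x) * (y * z - x) <= (y - 2) * (y * z - 2).
  have : 0 <= y * z - x by nra.
  have : y * z - x <= y * z - 2 by lra.
  nra.
have e2 : y^+2 * z <= (z + 2) * z by nra.
have e3 : 0 <= z * (2 * y - 3) + 2 * y - 6 by nra.
nra.
Qed.

Lemma Nineq {R : realFieldType} (x y z g : R) :
  2 <= x -> x < y -> y^+2 - 2 < z -> 0 <= g -> g = z^+3 - 3 * z - (y * z - x)^+2 ->
  [/\ 0 <= (z * (z - 2) * g - (y - x) * (y * z - x)) + z * (z - 2) * (z + 1),
      0 <= (z * (z - 2) * g - (y - x) * (y * z - x)) * z + z * (z - 2) * (z + 1),
      0 <= (z * (z - 2) * g - (y - x) * (y * z - x)) * (z - 1) + (z * (z - 2) * (y * z - x) + (y - x))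
    & 0 <= (z * (z - 2) * g - (y - x) * (y * z - x)) * ((y - 1) * z - x + 1)
           + z * (z - 2) * (z + 1) * (y - x) + (z * (z - 2) * (y * z - x) + (y - x))].
Proof.
move=> h1 h2 h3 hg eg; have hz := zgt h1 h2 h3; have k1 := K1 h1 h2 h3.
have [t et] : exists t, t = y * z - x by exists (y * z - x).
rewrite -et in k1 eg *.
have z2 : 2 < z by lra.
have hzg : 0 <= z * (z - 2) * g by apply: mulr_ge0 => //; nra.
have htq : z <= t.
  have : 0 <= (y - 2) * z by apply: mulr_ge0; lra.
  rewrite et; nra.
split.
- have e : 0 <= (z - 1) * ((z - 2) * (z + 1)) by apply: mulr_ge0; [lra | apply: mulr_ge0; lra].
  nra.
- have -> : (z * (z - 2) * g - (y - x) * t) * z + z * (z - 2) * (z + 1)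
     = z * (z * (z - 2) * g + ((z - 2) * (z + 1) - (y - x) * t)) by ring.
  apply: mulr_ge0; first lra.
  nra.
- have e1 : (z - 1) * (y - x) <= z * (z - 2) by nra.
  have e2 : 0 <= (z - 1) * (z * (z - 2) * g) by apply: mulr_ge0; lra.
  have e3 : (z - 1) * (y - x) * t <= z * (z - 2) * t by apply: ler_wpM2r; lra.
  nra.
- have -> : (y - 1) * z - x + 1 = t - z + 1 by rewrite et; ring.
  have etq : t^+2 = z^+3 - 3 * z - g by rewrite eg; ring.
  have -> : (z * (z - 2) * g - (y - x) * t) * (t - z + 1) + z * (z - 2) * (z + 1) * (y - x)
     + (z * (z - 2) * t + (y - x))
     = z * (z - 2) * g * (t - z + 1) + (y - x) * (g + (z - 1) * (t - z) + 1) + z * (z - 2) * t.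
    by rewrite eg; ring.
  have f1 : 0 <= z * (z - 2) * g * (t - z + 1) by apply: mulr_ge0; lra.
  have f2 : 0 <= (y - x) * (g + (z - 1) * (t - z) + 1).
    apply: mulr_ge0; first lra.
    have : 0 <= (z - 1) * (t - z) by apply: mulr_ge0; lra.
    lra.
  have f3 : 0 <= z * (z - 2) * t by apply: mulr_ge0; nra.
  lra.
Qed.

Lemma ib {R : realFieldType} (x y z g : R) : 2 <= x -> x < y -> y^+2 - 2 < z -> 0 <= g ->
  0 <= (z^+2 - z - 1) * g + z^+2 - 3 * z + x * y * z - x^+2.
Proof. move=> h1 h2 h3 h4. have hz := zgt h1 h2 h3. have z2 : 2 < z by lra.
have h5 : 0 <= (z^+2 - z - 1) * g by apply: mulr_ge0 => //; nra.
have h6 : 2 * x * z <= x * y * z.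
  have : 0 <= (y - 2) * (x * z) by apply: mulr_ge0; nra.
  nra.
have h7 : x * z <= 2 * x * z - x^+2 by nra.
have h8 : 2 * z <= x * z by nra.
nra. Qed.
Lemma pc {R : realFieldType} (x y z g : R) : 2 <= x -> x < y -> y^+2 - 2 < z -> 0 <= g ->
  0 < (z^+2 - 1) * g + z^+2 - z + x * y * z - x^+2.
Proof. move=> h1 h2 h3 h4. have hz := zgt h1 h2 h3. have z2 : 2 < z by lra.
have h5 : 0 <= (z^+2 - 1) * g by apply: mulr_ge0 => //; nra.
have h6 : 2 * x * z <= x * y * z.
  have : 0 <= (y - 2) * (x * z) by apply: mulr_ge0; nra.
  nra.
have h7 : x * z <= 2 * x * z - x^+2 by nra.
have h8 : 2 * z <= x * z by nra.
nra. Qed.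
Lemma pd {R : realFieldType} (x y z g : R) : 2 <= x -> x < y -> y^+2 - 2 < z -> 0 <= g ->
  0 <= (z^+4 - z^+3 - 2 * z^+2 + z + 1) * g + (3 * z + 3 * z^+2 - 3 * z^+3 - 2 * x * y * z - x * y * z^+2 + 2 * x * y * z^+3 + x^+2 + x^+2 * z - 2 * x^+2 * z^+2).
Proof. move=> h1 h2 h3 h4. have hz := zgt h1 h2 h3. have z2 : 2 < z by lra.
have h5 : 0 <= (z^+4 - z^+3 - 2 * z^+2 + z + 1) * g.
  apply: mulr_ge0 => //.
  have -> : z^+4 - z^+3 - 2 * z^+2 + z + 1 = z^+2 * ((z - 2) * (z + 1)) + (z + 1) by ring.
  have : 0 <= z^+2 * ((z - 2) * (z + 1)) by apply: mulr_ge0; [apply: sqr_ge0 | apply: mulr_ge0; lra].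
  lra.
set T := z * (2 * x * y - 3) - (x * y + 2 * x^+2 - 3).
have hxy : 4 <= x * y by nra.
have hT1 : y * (2 * x * y - 3) <= z * (2 * x * y - 3) by apply: ler_wpM2r; lra.
have hT2 : 2 * x * y - x^+2 - 3 <= 2 * T.
  have e1 : 0 <= (y - x) * (4 * x - 6) by apply: mulr_ge0; lra.
  have e2 : 0 <= 4 * x * y * (y - 2) by apply: mulr_ge0; [lra|lra].
  have e3 : 0 <= (x - 3)^+2 by apply: sqr_ge0.
  rewrite /T; nra.
have hT0 : 0 <= T by nra.
have hT3 : 2 * T <= z * T by apply: ler_wpM2r; lra.
have -> : 3 * z + 3 * z^+2 - 3 * z^+3 - 2 * x * y * z - x * y * z^+2 + 2 * x * y * z^+3 + x^+2 + x^+2 * z - 2 * x^+2 * z^+2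
   = z * (z * T - (2 * x * y - x^+2 - 3)) + x^+2 by rewrite /T; ring.
have : 0 <= z * (z * T - (2 * x * y - x^+2 - 3)) by apply: mulr_ge0; lra.
have : 0 <= x^+2 by apply: sqr_ge0.
lra. Qed.


Lemma fk_words (R : comNzRingType) (A B : 'M[R]_2) pre k :
  \tr (phiG A B pre * Dm A B k * 1) =
  \tr (phiG A B (pre ++ w_abk (k + 3))) - \tr (phiG A B (pre ++ w_ab2 ++ w_abk k ++ w_ab2)).
Proof. by rewrite mulr1 -words_D raddfB. Qed.

Lemma lt_from {R : realFieldType} (z a E : R) : z * a = E -> 0 < z -> 0 < E -> 0 < a.
Proof. move=> <- hz hE; by rewrite pmulr_rgt0 in hE. Qed.
Lemma le_from {R : realFieldType} (z a b E : R) : z * (b - a) = E -> 0 < z -> 0 <= E -> a <= b.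
Proof. move=> hE hz hE0; rewrite -hE pmulr_rge0 // in hE0; by rewrite -subr_ge0. Qed.

Lemma short_case (R : realFieldType) (A B : 'M[R]_2) (x y z : R) pre :
  \det A = 1 -> \det B = 1 -> \tr A = x -> \tr B = y -> \tr (A *m B) = z ->
  2 <= x -> x < y -> y^+2 - 2 < z -> 0 <= z^+3 - 3 * z - (y * z - x)^+2 ->
  (pre = [::] \/ pre = w_ab) ->
  forall k, 0 < \tr (phiG A B pre * Dm A B k * 1).
Proof.
move=> dA dB hx hy hz h1 h2 h3 hg hpre.
have hz' : \tr (A * B) = z by rewrite -mulmxE.
have dP : \det (A * B) = 1 by rewrite -mulmxE det_mulmx dA dB mulr1.
have z2 : 2 <= z by have := zgt h1 h2 h3; lra.
have z0 : 0 < z by lra.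
apply: (@seq_pos _ (fun k => \tr (phiG A B pre * Dm A B k * 1)) z z2).
- by move=> k; rewrite tr_rec // hz'.
- rewrite fk_words !tr_phi dA dB hx hy hz /=.
  case: hpre => -> /=.
  + apply: (@lt_from _ 1 _ ((z^+3 - 3 * z - (y * z - x)^+2) + 2)); [ring | lra | lra].
  + apply: (@lt_from _ z _ ((z^+2 - 1) * (z^+3 - 3 * z - (y * z - x)^+2) + z^+2 - z + x * y * z - x^+2)); [ring | lra | ].
    exact: pc.
- rewrite !fk_words !tr_phi dA dB hx hy hz /=.
  case: hpre => -> /=.
  + apply: (@le_from _ z _ _ ((z^+2 - z - 1) * (z^+3 - 3 * z - (y * z - x)^+2) + z^+2 - 3 * z + x * y * z - x^+2)); [ring | lra | ].
    exact: ib.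
  + apply: (@le_from _ (z^+2) _ _ ((z^+4 - z^+3 - 2 * z^+2 + z + 1) * (z^+3 - 3 * z - (y * z - x)^+2) + (3 * z + 3 * z^+2 - 3 * z^+3 - 2 * x * y * z - x * y * z^+2 + 2 * x * y * z^+3 + x^+2 + x^+2 * z - 2 * x^+2 * z^+2))); [ring | nra | ].
    exact: pd.
Qed.


Definition mk22 {R : comNzRingType} (p q r s : R) : 'M[R]_2 :=
  \matrix_(i, j) if i == 0 then (if j == 0 then p else q) else (if j == 0 then r else s).
Lemma mk22E (R : comNzRingType) (p q r s : R) :
  [/\ (mk22 p q r s) 0 0 = p, (mk22 p q r s) 0 1 = q, (mk22 p q r s) 1 0 = r & (mk22 p q r s) 1 1 = s].
Proof. by rewrite !mxE. Qed.

Definition pos {R : realFieldType} (M : 'M[R]_2) :=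
  [/\ 0 <= M 0 0, 0 <= M 0 1, 0 <= M 1 0 & 1 <= M 1 1].

Lemma pos_mul (R : realFieldType) (M N : 'M[R]_2) : pos M -> pos N -> pos (M *m N).
Proof.
case=> m00 m01 m10 m11 [n00 n01 n10 n11]; rewrite /pos !mul22.
split; try by apply: addr_ge0; apply: mulr_ge0 => //; lra.
have : 0 <= M 1 0 * N 0 1 by apply: mulr_ge0.
have : 1 <= M 1 1 * N 1 1 by nra.
lra.
Qed.

Lemma pos1 (R : realFieldType) : pos (1%:M : 'M[R]_2).
Proof. by rewrite /pos !mxE /=; split=> //; lra. Qed.

Lemma pos_phi (R : realFieldType) (A B : 'M[R]_2) w : pos A -> pos B -> pos (phiG A B w).
Proof.
move=> pA pB; elim: w => [|l w IH] /=; first exact: pos1.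
by case: l; apply: pos_mul.
Qed.

Lemma tr_pos {R : realFieldType} {U M : 'M[R]_2} :
  pos U -> 0 <= M 0 0 -> 0 <= M 0 1 -> 0 <= M 1 0 -> 0 <= M 1 1 ->
  U 1 1 * M 1 1 <= \tr (U *m M).
Proof.
case=> u00 u01 u10 u11 m00 m01 m10 m11; rewrite tr22 !mul22.
have : 0 <= U 0 0 * M 0 0 by apply: mulr_ge0.
have : 0 <= U 0 1 * M 1 0 by apply: mulr_ge0.
have : 0 <= U 1 0 * M 0 1 by apply: mulr_ge0; lra.
lra.
Qed.

Lemma mk00 (R : comNzRingType) (p q r s : R) : (mk22 p q r s) 0 0 = p. Proof. by rewrite mxE. Qed.
Lemma mk01 (R : comNzRingType) (p q r s : R) : (mk22 p q r s) 0 1 = q. Proof. by rewrite mxE. Qed.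
Lemma mk10 (R : comNzRingType) (p q r s : R) : (mk22 p q r s) 1 0 = r. Proof. by rewrite mxE. Qed.
Lemma mk11 (R : comNzRingType) (p q r s : R) : (mk22 p q r s) 1 1 = s. Proof. by rewrite mxE. Qed.
Ltac mks := rewrite ?mk00 ?mk01 ?mk10 ?mk11.

Lemma ge_from {R : realFieldType} {z a E : R} : z * a = E -> 0 < z -> 0 <= E -> 0 <= a.
Proof. move=> <- hz hE; by rewrite pmulr_rge0 in hE. Qed.

Lemma nonshort (R : realFieldType) (a b d x y z : R) (U : 'M[R]_2) :
  0 <= a -> 0 <= b -> 0 <= d ->
  x = 2 + a * b -> y = 2 + d -> z = 2 + (a + 1) * (b + d) ->
  x < y -> y^+2 - 2 < z -> 0 <= z^+3 - 3 * z - (y * z - x)^+2 ->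
  pos U ->
  forall k, 0 < \tr (U * (mk22 (1 + d) 1 d 1 * Dm (mk22 1 a b (1 + a * b)) (mk22 (1 + d) 1 d 1) k
                        * (mk22 1 a b (1 + a * b) * mk22 (1 + d) 1 d 1))).
Proof.
move=> ha hb hd ex ey ez h2 h3 hg pU.
set A0 := mk22 1 a b (1 + a * b); set B0 := mk22 (1 + d) 1 d 1.
have h1 : 2 <= x.
  rewrite ex; have : 0 <= a * b by apply: mulr_ge0.
  lra.
have dA : \det A0 = 1 by rewrite det22 /A0; mks; ring.
have dB : \det B0 = 1 by rewrite det22 /B0; mks; ring.
have hx : \tr A0 = x by rewrite tr22 /A0; mks; rewrite ex; ring.
have hy : \tr B0 = y by rewrite tr22 /B0; mks; rewrite ey; ring.
have hz : \tr (A0 *m B0) = z by rewrite tr22 !mul22 /A0 /B0; mks; rewrite ez; ring.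
have hz' : \tr (A0 * B0) = z by rewrite -mulmxE.
have dP : \det (A0 * B0) = 1 by rewrite -mulmxE det_mulmx dA dB mulr1.
have z2 : 2 < z by have := zgt h1 h2 h3; lra.
have pA : pos A0.
  rewrite /pos /A0; mks.
  have : 0 <= a * b by apply: mulr_ge0.
  split=> //; lra.
have pB : pos B0 by rewrite /pos /B0; mks; split=> //; lra.
set R0 := phiG A0 B0 [:: lb; la; lb].
have pR : pos R0 by apply: pos_phi.
have R00 : R0 0 0 = (y - 1) * z - x + 1 by rewrite /R0 /= !mul22 /A0 /B0; mks; ent; rewrite ex ey ez; ring.
have R01 : R0 0 1 = a + z by rewrite /R0 /= !mul22 /A0 /B0; mks; ent; rewrite ez; ring.
have R10 : R0 1 0 = b + d * z by rewrite /R0 /= !mul22 /A0 /B0; mks; ent; rewrite ez; ring.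
have R11 : R0 1 1 = z - 1 by rewrite /R0 /= !mul22 /A0 /B0; mks; ent; rewrite ez; ring.
set E := B0 - (x%:M - A0).
have E00 : E 0 0 = y - x by rewrite /E; ent; rewrite /A0 /B0; mks; rewrite ey; ring.
have E01 : E 0 1 = 1 + a by rewrite /E; ent; rewrite /A0 /B0; mks; ring.
have E10 : E 1 0 = d + b by rewrite /E; ent; rewrite /A0 /B0; mks; ring.
have E11 : E 1 1 = 0 by rewrite /E; ent; rewrite /A0 /B0; mks; rewrite ex; ring.
set g := z^+3 - 3 * z - (y * z - x)^+2.
have eM0 : B0 * Dm A0 B0 0 * (A0 * B0) = g *: R0 + (z + 1) *: E + (y * z - x)%:M.
  rewrite -words_M; exact: (@J1 _ A0 B0 x y z dA dB hx hy hz).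
have eM1 : (z - 1) *: (B0 * Dm A0 B0 1 * (A0 * B0) - B0 * Dm A0 B0 0 * (A0 * B0)) =
   (z * (z - 2) * g - (y - x) * (y * z - x)) *: R0
   + (z * (z - 2) * (z + 1)) *: E + (z * (z - 2) * (y * z - x) + (y - x))%:M.
  rewrite -!words_M; exact: (@J2 _ A0 B0 x y z dA dB hx hy hz).
clearbody R0 E.
have tQ0 : 0 < y * z - x by have := zgt h1 h2 h3; nra.
have g0 : 0 <= g by [].
have reass : forall k, U * (B0 * Dm A0 B0 k * (A0 * B0)) = U * B0 * Dm A0 B0 k * (A0 * B0).
  by move=> k; rewrite !mulrA.
suff H : forall k, 0 < \tr (U * B0 * Dm A0 B0 k * (A0 * B0)) by move=> k; rewrite reass.
apply: (@seq_pos _ (fun k => \tr (U * B0 * Dm A0 B0 k * (A0 * B0))) z (ltW z2)).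
- by move=> k; rewrite tr_rec // hz'.
- rewrite -reass eM0 -mulmxE.
  case: pR => r00 r01 r10 r11.
  have hE0 : 0 <= y - x by lra.
  have hM00 : 0 <= (g *: R0 + (z + 1) *: E + (y * z - x)%:M) 0 0.
    ent; rewrite E00; apply: addr_ge0; [apply: addr_ge0|lra]; apply: mulr_ge0; lra.
  have hM01 : 0 <= (g *: R0 + (z + 1) *: E + (y * z - x)%:M) 0 1.
    ent; rewrite E01 addr0; apply: addr_ge0; apply: mulr_ge0; lra.
  have hM10 : 0 <= (g *: R0 + (z + 1) *: E + (y * z - x)%:M) 1 0.
    ent; rewrite E10 addr0; apply: addr_ge0; apply: mulr_ge0; lra.
  have hM11 : 0 < (g *: R0 + (z + 1) *: E + (y * z - x)%:M) 1 1.
    ent; rewrite E11 mulr0 addr0.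
    have : 0 <= g * R0 1 1 by apply: mulr_ge0; lra.
    lra.
  have T := tr_pos pU hM00 hM01 hM10 (ltW hM11).
  have P0 : 0 < U 1 1 * (g *: R0 + (z + 1) *: E + (y * z - x)%:M) 1 1.
    case: pU => _ _ _ u11; apply: mulr_gt0; lra.
  lra.
- rewrite -subr_ge0 -raddfB /= -!reass -mulrBr -mulmxE.
  set Dd := (B0 * Dm A0 B0 1 * (A0 * B0) - B0 * Dm A0 B0 0 * (A0 * B0)) in eM1 *.
  have [n1 n2 n3 n4] := @Nineq _ x y z g h1 h2 h3 hg (erefl g).
  case: pR => r00 r01 r10 r11.
  have z1 : 0 < z - 1 by lra.
  have eD : forall i j, (z - 1) * Dd i j = ((z * (z - 2) * g - (y - x) * (y * z - x)) *: R0
     + (z * (z - 2) * (z + 1)) *: E + (z * (z - 2) * (y * z - x) + (y - x))%:M) i j.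
    by move=> i j; rewrite -eM1 e_scale.
  have d00 : 0 <= Dd 0 0.
    apply: (ge_from (eD 0 0) z1); ent; rewrite R00 E00.
    move: n4; lra.
  have d01 : 0 <= Dd 0 1.
    apply: (ge_from (eD 0 1) z1); ent; rewrite R01 E01 addr0.
    have -> : (z * (z - 2) * g - (y - x) * (y * z - x)) * (a + z) + z * (z - 2) * (z + 1) * (1 + a)
      = a * ((z * (z - 2) * g - (y - x) * (y * z - x)) + z * (z - 2) * (z + 1))
        + ((z * (z - 2) * g - (y - x) * (y * z - x)) * z + z * (z - 2) * (z + 1)) by ring.
    apply: addr_ge0 => //; apply: mulr_ge0 => //.
  have d10 : 0 <= Dd 1 0.
    apply: (ge_from (eD 1 0) z1); ent; rewrite R10 E10 addr0.
    have -> : (z * (z - 2) * g - (y - x) * (y * z - x)) * (b + d * z) + z * (z - 2) * (z + 1) * (d + b)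
      = b * ((z * (z - 2) * g - (y - x) * (y * z - x)) + z * (z - 2) * (z + 1))
        + d * ((z * (z - 2) * g - (y - x) * (y * z - x)) * z + z * (z - 2) * (z + 1)) by ring.
    apply: addr_ge0; apply: mulr_ge0 => //.
  have d11 : 0 <= Dd 1 1.
    apply: (ge_from (eD 1 1) z1); ent; rewrite R11 E11 mulr0 addr0.
    exact: n3.
  have T := tr_pos pU d00 d01 d10 d11.
  have P0 : 0 <= U 1 1 * Dd 1 1.
    case: pU => _ _ _ u11; apply: mulr_ge0; lra.
  lra.
Qed.

Lemma trC (R : comNzRingType) (M N : 'M[R]_2) : \tr (M * N) = \tr (N * M).
Proof. by rewrite -!mulmxE mxtrace_mulC. Qed.

Definition good (u : word) : bool := (u == w_ab) || (u == w_ab2).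

Lemma flat_rcons {ws : seq word} : all good ws -> ws != [::] ->
  exists v, flatten ws = rcons v lb.
Proof.
elim: ws => [|u ws IH] //= /andP [gu gws] _.
case: (ws =P [::]) => [->|/eqP hne].
  by case/orP: gu => /eqP ->; [exists [:: la] | exists [:: la; lb]].
have [v ->] := IH gws hne.
by exists (u ++ v); rewrite rcons_cat.
Qed.

Lemma phiG_rcons (R : comNzRingType) (A B : 'M[R]_2) v : phiG A B (rcons v lb) = phiG A B v * B.
Proof. by rewrite -cats1 phiG_cat phiG_b. Qed.

Lemma decomp (R : realFieldType) (A B : 'M[R]_2) ws :
  pos A -> pos B -> all good ws -> ws <> [::] -> ws <> [:: w_ab] ->
  exists U, pos U /\ forall k, \tr (phiG A B (flatten ws) * Dm A B k * 1) = \tr (U * (B * Dm A B k * (A * B))).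
Proof.
move=> pA pB; case: ws => [|X ws] //= /andP [gX gws] _ hne.
rewrite phiG_cat.
case: (ws =P [::]) => [hws|/eqP hws].
- move: hne gX; rewrite hws /good => hne /orP [/eqP hX|/eqP hX]; first by rewrite hX in hne.
  exists 1%:M; split; first exact: pos1.
  move=> k; rewrite hX phiG_ab2 /= !mulr1 mul1r.
  by rewrite -[A * B * B * _]mulrA trC.
- have [v hv] := flat_rcons gws hws.
  rewrite hv phiG_rcons.
  move: gX; rewrite /good => /orP [/eqP hX|/eqP hX]; rewrite hX.
  + exists (phiG A B v); split; first exact: pos_phi.
    move=> k; rewrite phiG_ab mulr1.
    by rewrite -mulrA trC -!mulrA.
  + exists (B * phiG A B v); split; first by rewrite -mulmxE; apply: pos_mul => //; apply: pos_phi.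
    move=> k; rewrite phiG_ab2 mulr1.
    set V := phiG A B v; set D := Dm A B k.
    rewrite (_ : A * B * B * (V * B) * D = (A * B) * (B * (V * B) * D)); last by rewrite !mulrA.
    by rewrite trC -!mulrA.
Qed.

Lemma frame_main (R : realFieldType) (a b d x y z : R) ws k :
  0 <= a -> 0 <= b -> 0 <= d ->
  x = 2 + a * b -> y = 2 + d -> z = 2 + (a + 1) * (b + d) ->
  x < y -> y^+2 - 2 < z -> 0 <= z^+3 - 3 * z - (y * z - x)^+2 ->
  all good ws ->
  \tr (phiG (mk22 1 a b (1 + a * b)) (mk22 (1 + d) 1 d 1) (flatten ws ++ w_ab2 ++ w_abk k ++ w_ab2))
  < \tr (phiG (mk22 1 a b (1 + a * b)) (mk22 (1 + d) 1 d 1) (flatten ws ++ w_abk (k + 3))).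
Proof.
move=> ha hb hd ex ey ez h2 h3 hg gws.
set A0 := mk22 1 a b (1 + a * b); set B0 := mk22 (1 + d) 1 d 1.
have h1 : 2 <= x.
  rewrite ex; have : 0 <= a * b by apply: mulr_ge0.
  lra.
have dA : \det A0 = 1 by rewrite det22 /A0; mks; ring.
have dB : \det B0 = 1 by rewrite det22 /B0; mks; ring.
have hx : \tr A0 = x by rewrite tr22 /A0; mks; rewrite ex; ring.
have hy : \tr B0 = y by rewrite tr22 /B0; mks; rewrite ey; ring.
have hz : \tr (A0 *m B0) = z by rewrite tr22 !mul22 /A0 /B0; mks; rewrite ez; ring.
have pA : pos A0.
  rewrite /pos /A0; mks.
  have : 0 <= a * b by apply: mulr_ge0.
  split=> //; lra.
have pB : pos B0 by rewrite /pos /B0; mks; split=> //; lra.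
rewrite -subr_gt0 -raddfB /= words_D -[phiG _ _ _ * _]mulr1.
case: (ws =P [::]) => [->|hne].
  exact: (@short_case _ A0 B0 x y z [::] dA dB hx hy hz h1 h2 h3 hg (or_introl erefl) k).
case: (ws =P [:: w_ab]) => [->|hne2].
  exact: (@short_case _ A0 B0 x y z w_ab dA dB hx hy hz h1 h2 h3 hg (or_intror erefl) k).
have [U [pU hU]] := @decomp _ A0 B0 ws pA pB gws hne hne2.
rewrite hU.
exact: (@nonshort _ a b d x y z U ha hb hd ex ey ez h2 h3 hg pU).
Qed.


Lemma frame_exists (R : rcfType) (x y z : R) : 2 <= x -> x < y -> y^+2 - 2 < z ->
  exists a b d : R, [/\ 0 <= a, 0 <= b & 0 <= d] /\
                    [/\ x = 2 + a * b, y = 2 + d & z = 2 + (a + 1) * (b + d)].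
Proof.
move=> h1 h2 h3.
set d := y - 2; set Z := z - x - y + 2; set D := Z^+2 - 4 * d * (x - 2).
have d0 : 0 < d by rewrite /d; lra.
have Z0 : y * (y - 2) <= Z by rewrite /Z; nra.
have yy : 0 <= y * (y - 2) by apply: mulr_ge0; lra.
have D0 : 0 <= D.
  rewrite /D.
  have e1 : (y * (y - 2))^+2 <= Z^+2 by nra.
  have e2 : 4 * d * (x - 2) <= (y * (y - 2))^+2.
    have y2 : 2 <= y by lra.
    have y4 : 4 <= y^+2 by rewrite expr2; nra.
    have e3 : 0 <= (y - 2) * (y^+2 - 4) by apply: mulr_ge0; lra.
    have e4 : 0 <= (y - 2) * (y - x) by apply: mulr_ge0; lra.
    rewrite /d; nra.
  lra.
set s := Num.sqrt D.
have s0 : 0 <= s by apply: sqrtr_ge0.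
have s2 : s^+2 = D by apply: sqr_sqrtr.
have sZ : s <= Z.
  have : s^+2 <= Z^+2.
    rewrite s2 /D; have : 0 <= 4 * d * (x - 2) by apply: mulr_ge0; lra.
    lra.
  nra.
have dn : d != 0 by apply/eqP; lra.
set a := (Z - s) / (2 * d); set b := (Z + s) / 2.
have hab : a * b = x - 2.
  have -> : a * b = (Z^+2 - s^+2) / (4 * d) by rewrite /a /b; field.
  by rewrite s2 /D; field.
have had : a * d = (Z - s) / 2 by rewrite /a; field.
exists a, b, d; split; split.
- apply: divr_ge0; lra.
- apply: divr_ge0; lra.
- lra.
- by rewrite hab; ring.
- by rewrite /d; ring.
- have -> : (a + 1) * (b + d) = a * b + a * d + b + d by ring.
  by rewrite hab had /b /Z /d; field.
Qed.

Lemma phi_map (A B : 'M[int]_2) w :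
  phiG (toR A) (toR B) w = map_mx intr (phi A B w).
Proof.
elim: w => [|l w IH] /=; first by rewrite map_mx1.
by rewrite IH map_mxM; case: l.
Qed.

Lemma trw_R (A B : 'M[int]_2) w :
  (trw A B w)%:~R = \tr (phiG (toR A) (toR B) w) :> Rdefinitions.R.
Proof. by rewrite phi_map trace_map_mx. Qed.

Lemma tr_same (R : comNzRingType) (A B A' B' : 'M[R]_2) w :
  \det A = 1 -> \det B = 1 -> \det A' = 1 -> \det B' = 1 ->
  \tr A = \tr A' -> \tr B = \tr B' -> \tr (A *m B) = \tr (A' *m B') ->
  \tr (phiG A B w) = \tr (phiG A' B' w).
Proof.
move=> dA dB dA' dB' hx hy hz.
by rewrite !tr_phi dA dB dA' dB' hx hy hz.
Qed.

Theorem lemma7p2 (A B : 'M[int]_2) (w : word) (k : nat) :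
  \det A = 1 -> \det B = 1 ->
  A *m B != B *m A ->
  well_oriented (toR A) (toR B) ->
  2 <= \tr A -> \tr A < \tr B ->
  \tr (B *m B) < \tr (A *m B) ->
  trw A B (w_ab2 ++ w_ab2) <= trw A B (w_ab ++ w_ab ++ w_ab) - 2 ->
  (1 <= k)%N ->
  (6 %| size (w ++ w_ab2 ++ w_abk k ++ w_ab2))%N ->
  w = [::] \/ is_ab_ab2_product w ->
  trw A B (w ++ w_ab2 ++ w_abk k ++ w_ab2) < trw A B (w ++ w_abk (k + 3)).
Proof.
move=> dA dB _ _ h2A hAB hBB hg _ _ hw.
pose AR := toR A; pose BR := toR B.
pose x : Rdefinitions.R := (\tr A)%:~R.
pose y : Rdefinitions.R := (\tr B)%:~R.
pose z : Rdefinitions.R := (\tr (A *m B))%:~R.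
have dAR : \det AR = 1 by rewrite /AR /toR det_map_mx dA.
have dBR : \det BR = 1 by rewrite /BR /toR det_map_mx dB.
have hxR : \tr AR = x by rewrite /AR /toR trace_map_mx.
have hyR : \tr BR = y by rewrite /BR /toR trace_map_mx.
have hzR : \tr (AR *m BR) = z by rewrite /AR /BR /toR -map_mxM trace_map_mx.
have h1 : 2 <= x by rewrite /x (_ : 2 = (2 : int)%:~R) // ler_int.
have h2 : x < y by rewrite /x /y ltr_int.
have h3 : y^+2 - 2 < z.
  have : (\tr (B *m B))%:~R < z by rewrite /z ltr_int.
  have -> : (\tr (B *m B))%:~R = \tr (BR *m BR) :> Rdefinitions.R
    by rewrite /BR /toR -map_mxM trace_map_mx.
  rewrite -hyR !tr22 !mul22; move: dBR; rewrite det22 => dBR'.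
  lra.
have hg' : 0 <= z^+3 - 3 * z - (y * z - x)^+2.
  move: hg; rewrite -(ler_int Rdefinitions.R) rmorphB /= !trw_R !tr_phi dAR dBR hxR hyR hzR /=.
  lra.
have [a [b [d [[ha hb hd] [ex ey ez]]]]] := @frame_exists _ x y z h1 h2 h3.
set A0 := mk22 1 a b (1 + a * b); set B0 := mk22 (1 + d) 1 d 1.
have dA0 : \det A0 = 1 by rewrite det22 /A0; mks; ring.
have dB0 : \det B0 = 1 by rewrite det22 /B0; mks; ring.
have hx0 : \tr A0 = x by rewrite tr22 /A0; mks; rewrite ex; ring.
have hy0 : \tr B0 = y by rewrite tr22 /B0; mks; rewrite ey; ring.
have hz0 : \tr (A0 *m B0) = z by rewrite tr22 !mul22 /A0 /B0; mks; rewrite ez; ring.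
have same : forall u, \tr (phiG AR BR u) = \tr (phiG A0 B0 u).
  move=> u; apply: tr_same => //.
  - by rewrite hxR hx0.
  - by rewrite hyR hy0.
  - by rewrite hzR hz0.
rewrite -(ltr_int Rdefinitions.R) !trw_R !same.
have [ws [gws ew]] : exists ws, all good ws /\ w = flatten ws.
  by case: hw => [->|[ws [gws ->]]]; [exists [::] | exists ws].
rewrite ew.
exact: (@frame_main _ a b d x y z ws k ha hb hd ex ey ez h2 h3 hg' gws).
Qed.
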